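(* Let $G$ be a finite non-cyclic group. (i) If $\psi'(G)\ge \frac{19}{43}$, then $2$ divides $|G|$. (ii) If $\psi'(G)>\frac{31}{77}$, then $2$ or $3$ divides $|G|$.
   Context: For a finite group $G$, $\psi(G)=\sum_{x\in G} o(x)$ and $\psi'(G)=\psi(G)/\psi(\mathcal{C}_{|G|})$, where $\mathcal{C}_n$ is the cyclic group of order $n$. *)

(* Defs.v *)
From mathcomp Require Import all_boot all_order all_algebra all_fingroup all_solvable.
Set Implicit Arguments. Unset Strict Implicit. Unset Printing Implicit Defensive.
Import GRing.Theory Num.Theory.

Definition psi (gT : finGroupType) (G : {group gT}) : nat := \sum_(x in G) #[x]%g.

(* psi of the cyclic group C_n, realized as Z/nZ = {0,...,n-1} under addition:
   the additive order of i in Z/nZ is n / gcd(i, n). *)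
Definition psi_cyclic (n : nat) : nat := \sum_(i < n) n %/ gcdn i n.

Definition psi' (gT : finGroupType) (G : {group gT}) : rat :=
  ((psi G)%:R / (psi_cyclic #|G|)%:R)%R.

(* Main.v *)
Require Import Defs.
From mathcomp Require Import all_boot all_order all_algebra all_fingroup all_solvable.
Import GRing.Theory Num.Theory.
From mathcomp Require Import zify.
Set Implicit Arguments. Unset Strict Implicit. Unset Printing Implicit Defensive.

Lemma gcd_coprime_mul k a b : coprime a b -> gcdn k (a * b) = gcdn k a * gcdn k b.
Proof.
move=> co.
rewrite muln_gcdl !muln_gcdr gcdnA.
have -> : gcdn (gcdn (k * k) (k * b)) (a * k) = k.
  by rewrite -muln_gcdr [a * k]mulnC -muln_gcdr -gcdnA (gcdnC b) (eqP co) gcdn1 muln1.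
by [].
Qed.

Lemma term_mul k a b : 0 < a -> 0 < b -> coprime a b ->
  (a * b) %/ gcdn k (a * b) = (a %/ gcdn (k %% a) a) * (b %/ gcdn (k %% b) b).
Proof.
move=> a0 b0 co; rewrite gcd_coprime_mul // !gcdn_modl.
rewrite -{1}(divnK (dvdn_gcdr k a)) -{1}(divnK (dvdn_gcdr k b)).
by rewrite mulnACA mulnK // muln_gt0 !gcdn_gt0 a0 b0 !orbT.
Qed.

Lemma sum_crt a b (F : nat -> nat -> nat) : 0 < a -> 0 < b -> coprime a b ->
  \sum_(k < a * b) F (k %% a) (k %% b) = (\sum_(i < a) \sum_(j < b) F i j).
Proof.
move=> a0 b0 co.
have ab0 : 0 < a * b by rewrite muln_gt0 a0.
rewrite pair_bigA /=.
pose h (p : 'I_a * 'I_b) : 'I_(a * b) :=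
  Ordinal (ltn_pmod (chinese a b p.1 p.2) ab0).
pose h' (k : 'I_(a * b)) : 'I_a * 'I_b :=
  (Ordinal (ltn_pmod k a0), Ordinal (ltn_pmod k b0)).
rewrite (reindex h) /=; last first.
  exists h' => [[i j] _|k _]; rewrite /h /h'.
    congr pair; apply: val_inj => /=.
      by rewrite (modn_dvdm _ (dvdn_mulr _ (dvdnn a))) chinese_modl // modn_small.
    by rewrite (modn_dvdm _ (dvdn_mull _ (dvdnn b))) chinese_modr // modn_small.
  by apply: val_inj => /=; rewrite -chinese_mod // modn_small.
apply: eq_bigr => [[i j]] _ /=.
rewrite (modn_dvdm _ (dvdn_mulr _ (dvdnn a))) chinese_modl // modn_small //.
by rewrite (modn_dvdm _ (dvdn_mull _ (dvdnn b))) chinese_modr // modn_small.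
Qed.

Lemma psic_mul a b : 0 < a -> 0 < b -> coprime a b ->
  psi_cyclic (a * b) = psi_cyclic a * psi_cyclic b.
Proof.
move=> a0 b0 co; rewrite /psi_cyclic.
rewrite (eq_bigr (fun k : 'I_(a*b) => (a %/ gcdn (k %% a) a) * (b %/ gcdn (k %% b) b))); last first.
  by move=> k _; rewrite term_mul.
rewrite (sum_crt (fun i j => (a %/ gcdn i a) * (b %/ gcdn j b))) //.
rewrite big_distrl /=; apply: eq_bigr => i _.
by rewrite big_distrr.
Qed.
Lemma psic_nat n : psi_cyclic n = \sum_(0 <= i < n) n %/ gcdn i n.
Proof. by rewrite big_mkord. Qed.

Lemma psic_step r a : prime r ->
  psi_cyclic (r ^ a.+1) = psi_cyclic (r ^ a) + (r - 1) * r ^ (2 * a + 1).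
Proof.
move=> pr; have r0 : 0 < r by apply: prime_gt0.
set N := r ^ a.
have N0 : 0 < N by rewrite expn_gt0 r0.
rewrite !psic_nat expnSr -/N.
rewrite big_nat_mul.
rewrite (eq_bigr (fun i => N %/ gcdn i N + (r - 1) * (N * r))); last first.
  move=> i _.
  rewrite big_ltn; last by rewrite mulSn; lia.
  congr addn.
    by rewrite -muln_gcdl divnMr.
  rewrite (eq_big_nat _ _ (F2 := fun _ => N * r)); last first.
    move=> j /andP[lj hj].
    have cj : coprime j (N * r).
      rewrite /N -expnSr; apply: coprimeXr; rewrite coprime_sym prime_coprime //.
      apply/negP => rj.
      have : r %| j - i * r.
        by rewrite -(dvdn_addr _ (dvdn_mull i (dvdnn r))) subnKC // ltnW.
      move/dvdn_leq; rewrite mulSn in hj.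
      have -> : 0 < j - i * r by lia.
      move=> /(_ isT); lia.
    by rewrite (eqP cj) divn1.
  by rewrite sum_nat_const_nat mulSn; congr muln; lia.
rewrite big_split /= sum_nat_const_nat subn0; congr addn.
rewrite /N mulnCA -expnSr -expnD; congr (_ * r ^ _); lia.
Qed.

Lemma psic_pow r a : prime r -> (r + 1) * psi_cyclic (r ^ a) = r ^ (2 * a + 1) + 1.
Proof.
move=> pr; have r0 : 0 < r by apply: prime_gt0.
elim: a => [|a IH].
  by rewrite expn0 /psi_cyclic big_ord1 gcd0n divnn muln1 expn1.
rewrite psic_step // mulnDr IH.
have -> : 2 * a.+1 + 1 = (2 * a + 1) + 2 by lia.
rewrite (expnD r (2 * a + 1) 2); set X := r ^ (2 * a + 1).
rewrite -mulnn; clearbody X.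
have [Y hY] : exists Y, r = Y.+1 by exists r.-1; lia.
rewrite hY subSS subn0; nia.
Qed.

Lemma psic1 : psi_cyclic 1 = 1.
Proof. by rewrite /psi_cyclic big_ord1. Qed.

Lemma psic_gt0 n : 0 < n -> 0 < psi_cyclic n.
Proof.
case: n => // n _; rewrite /psi_cyclic big_ord_recl /= gcd0n divnn /=; lia.
Qed.

Lemma psic_lower q : forall n P, 0 < n -> q <= P ->
  (forall r, prime r -> r %| n -> q <= r /\ r < P) ->
  q * n ^ 2 <= P * psi_cyclic n.
Proof.
move=> k; elim: k.+1 {-2}k (ltnSn k) => // N IHN n leN P n0 qP hyp.
have [n1|n1] := leqP n 1.
  have -> : n = 1 by lia.
  by rewrite psic1; lia.
set r := max_pdiv n.
have pr : prime r by apply: max_pdiv_prime.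
have rn : r %| n by apply: max_pdiv_dvd.
have [m com defn] := pfactor_coprime pr n0.
set a := logn r n in defn.
have m0 : 0 < m by move: n0; rewrite defn muln_gt0 => /andP[].
have r0 : 0 < r by apply: prime_gt0.
have ra0 : 0 < r ^ a by rewrite expn_gt0 r0.
have a0 : 0 < a by rewrite /a logn_gt0 mem_primes pr n0 rn.
have [qr rP] := hyp r pr rn.
have mlt : m < n.
  rewrite defn -{1}[m]muln1 ltn_mul2l m0 /=.
  have : 1 < r by apply: prime_gt1.
  move=> h; apply: leq_trans h _; rewrite -{1}(expn1 r) leq_exp2l //; exact: prime_gt1.
have IH := IHN m (leq_trans mlt leN) r m0 qr.
have IH' : q * m ^ 2 <= r * psi_cyclic m.
  apply: IH.
  move=> s ps sm; have sn : s %| n by rewrite defn dvdn_mulr.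
  have [qs _] := hyp s ps sn; split => //.
  have : s <= r by apply: max_pdiv_max; rewrite mem_primes ps n0.
  rewrite leq_eqVlt => /orP[/eqP es|//].
  move: com; rewrite prime_coprime // -es sm //.
have hpow := psic_pow a pr.
have hmul : psi_cyclic n = psi_cyclic m * psi_cyclic (r ^ a).
  by rewrite defn psic_mul // coprime_sym coprimeXl.
rewrite hmul defn.
move: hpow IH'; rewrite expnD expnM.
set X := (r ^ 2) ^ a; set Y := psi_cyclic m; set Z := psi_cyclic (r ^ a).
have -> : (m * r ^ a) ^ 2 = m ^ 2 * X by rewrite expnMn /X -!expnM; congr (_ * r ^ _); rewrite mulnC.
move=> h1 h2.
have h3 : q * m ^ 2 * X <= r * Y * X by rewrite leq_mul2r h2 orbT.
have h4 : r * X <= (r + 1) * Z by rewrite h1 expn1 mulnC; lia.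
nia.
Qed.

Local Open Scope group_scope.
Lemma psi_cycle (gT : finGroupType) (x : gT) : psi <[x]>%G = psi_cyclic #[x].
Proof.
rewrite /psi /psi_cyclic.
change (\sum_(y in <[x]>) #[y] = \sum_(i < #[x]) #[x] %/ gcdn i #[x])%N.
have -> : <[x]> = [set x ^+ (nat_of_ord i) | i : 'I_#[x]].
  apply/setP => y; apply/idP/imsetP.
    by case/cyclePmin => i lti ->; exists (Ordinal lti).
  by case=> i _ ->; apply: mem_cycle.
rewrite big_imset /=; last first.
  move=> i j _ _ /eqP; rewrite eq_expg_mod_order !modn_small // => /eqP eij.
  exact: val_inj.
apply: eq_bigr => i _; by rewrite orderXgcd gcdnC.
Qed.

Lemma psi_cyclic_group (gT : finGroupType) (G : {group gT}) :
  cyclic G -> psi G = psi_cyclic #|G|.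
Proof.
case/cyclicP => x defG.
have -> : psi G = psi <[x]>%G by rewrite /psi defG.
by rewrite psi_cycle defG.
Qed.

Lemma psi_gt0 (gT : finGroupType) (G : {group gT}) : 0 < psi G.
Proof.
rewrite /psi (bigD1 1%g) //= order1; lia.
Qed.

Lemma psi_coset (gT : finGroupType) (G P : {group gT}) : P <| G ->
  psi G = (\sum_(c in G / P) #[c] * \sum_(y in G | coset P y == c) #[y ^+ #[c]])%N.
Proof.
case/andP=> sPG nPG.
rewrite /psi (partition_big (coset P) (mem (G / P))) /=; last first.
  by move=> y Gy; apply: mem_quotient.
apply: eq_bigr => c _; rewrite big_distrr /=; apply: eq_bigr => y /andP[Gy /eqP <-].
have Ny : y \in 'N(P) by apply: (subsetP nPG).
have dv : #[coset P y] %| #[y] by apply: (morph_order (coset_morphism P)).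
by rewrite orderXdiv // mulnC divnK.
Qed.

Lemma pow_norm (gT : finGroupType) (H : {group gT}) u x k :
  u \in H -> x \in 'N(H) -> (u * x) ^+ k * x ^- k \in H.
Proof.
move=> Hu Nx; elim: k => [|k IH]; first by rewrite !expg0 invg1 mulg1 group1.
have e : (u * x) ^+ k.+1 * x ^- k.+1 = ((u * x) ^+ k * x ^- k) * (u ^ (x ^- k)).
  rewrite expgSr [x ^+ k.+1]expgSr invMg /conjg invgK !mulgA.
  by rewrite mulgKV mulgK.
by rewrite e groupM // memJ_norm // groupV groupX.
Qed.

Lemma cent_trivial (gT : finGroupType) (P : {group gT}) (p : nat) x :
  p.-group P -> cyclic P -> p^'.-elt x -> x \in 'N(P) -> x \notin 'C(P) ->
  'C_P[x] = 1.
Proof.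
move=> pP cP p'x Nx nCx.
have nPA : <[x]> \subset 'N(P) by rewrite cycle_subG.
have co : coprime #|P| #|<[x]>| by apply: (pnat_coprime pP).
have TI := coprime_abel_cent_TI nPA co (cyclic_abelian cP).
have s1 : [~: P, <[x]>] \subset P by rewrite commg_subl.
have s2 : 'C_P(<[x]>) \subset P by apply: subsetIl.
have pK1 : p.-group [~: P, <[x]>] by apply: pgroupS pP.
have pK2 : p.-group 'C_P(<[x]>) by apply: pgroupS pP.
rewrite -cent_cycle.
have [i ei] : exists i, #|[~: P, <[x]>]| = (p ^ i)%N by exists (logn p #|[~: P, <[x]>]|); apply: card_pgroup.
have [j ej] : exists j, #|'C_P(<[x]>)| = (p ^ j)%N by exists (logn p #|'C_P(<[x]>)|); apply: card_pgroup.
have [le|le] := leqP i j.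
  have sK : [~: P, <[x]>] \subset 'C_P(<[x]>).
    by rewrite -(cardSg_cyclic cP) // ei ej dvdn_exp2l.
  have : [~: P, <[x]>] = 1.
    apply/trivgP; rewrite -TI subsetI subxx /=.
    by apply: subset_trans sK _; apply: subsetIr.
  by move/commG1P; rewrite centsC cycle_subG => hx; rewrite hx in nCx.
have sK : 'C_P(<[x]>) \subset [~: P, <[x]>].
  by rewrite -(cardSg_cyclic cP) // ei ej dvdn_exp2l // ltnW.
apply/trivgP; rewrite -TI subsetI sK /=; apply: subsetIr.
Qed.

Lemma coset_sum_bound (gT : finGroupType) (G P : {group gT}) (p : nat) c :
  p.-Sylow(G) P -> P <| G -> cyclic P -> c \in G / P ->
  (\sum_(y in G | coset P y == c) #[y ^+ #[c]] <= psi P)%N /\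
  (c \notin 'C_G(P) / P -> \sum_(y in G | coset P y == c) #[y ^+ #[c]] = #|P|)%N.
Proof.
move=> sylP nPG cP cG.
have [sPG nPG'] := andP nPG.
have pP : p.-group P := pHall_pgroup sylP.
case/morphimP: cG => y0 Ny0 Gy0 ->.
set x := y0.`_p^'.
set u0 := y0.`_p.
have sy0 : <[y0]> \subset G by rewrite cycle_subG.
have Gu0 : u0 \in G by apply: (subsetP sy0); apply: cycle_constt.
have Gx : x \in G by apply: (subsetP sy0); apply: cycle_constt.
have Pu0 : u0 \in P by rewrite (mem_normal_Hall sylP nPG Gu0) p_elt_constt.
have p'x : p^'.-elt x by apply: p_elt_constt.
have Nx : x \in 'N(P) by apply: (subsetP nPG').
have ecx : coset_morphism P y0 = coset P x.
  rewrite -{1}(consttC p y0) morphM ?(subsetP nPG') //= -/u0 -/x.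
  by rewrite coset_id // mul1g.
rewrite ecx.
set m := #[coset P x].
have xm : x ^+ m = 1.
  have Pxm : x ^+ m \in P.
    apply: coset_idr; first by rewrite groupX.
    by rewrite morphX // expg_order.
  have h1 : p.-elt (x ^+ m) by apply: mem_p_elt pP Pxm.
  have h2 : p^'.-elt (x ^+ m) by apply: p_eltX.
  by apply/eqP; rewrite -order_eq1; apply/eqP; apply: (pnat_1 h1 h2).
have eS : [set y in G | coset P y == coset P x] = [set u * x | u in P].
  apply/setP => y; rewrite inE; apply/andP/imsetP.
    case=> Gy /eqP ec; exists (y * x^-1); last by rewrite mulgKV.
    apply: coset_idr; first by rewrite groupM ?groupV // (subsetP nPG').
    by rewrite morphM ?groupV ?(subsetP nPG') // morphV //= ec mulgV.
  case=> u Pu ->; split; first by rewrite groupM // (subsetP sPG).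
  have Nu : u \in 'N(P) by apply: (subsetP nPG'); apply: (subsetP sPG).
  rewrite morphM //=.
  have h1 : coset P u = 1 by apply: coset_id.
  by rewrite h1 mul1g.
rewrite (eq_bigl (fun y => y \in [set u * x | u in P])); last first.
  by move=> y; rewrite -eS inE.
rewrite big_imset /=; last by move=> a b _ _; apply: mulIg.
have inU : forall u, u \in P -> (u * x) ^+ m \in <[u]>.
  move=> u Pu.
  have chu : <[u]>%G \char P by rewrite (sub_cyclic_char _ cP) cycle_subG.
  have nu := normal_norm (char_normal_trans chu nPG).
  have := pow_norm m (cycle_id u) (subsetP nu x Gx).
  by rewrite xm invg1 mulg1.
split.
  rewrite /psi; apply: leq_sum => u Pu.
  apply: dvdn_leq; first exact: order_gt0.
  by rewrite [#[u]]orderE; apply: order_dvdG; apply: inU.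
move=> nC.
have nCx : x \notin 'C(P).
  apply: contra nC => Cx; apply: mem_quotient; by rewrite inE Gx.
have CP1 := cent_trivial pP cP p'x Nx nCx.
rewrite -sum1_card; apply: eq_bigr => u Pu.
set w := (u * x) ^+ m.
have Pw : w \in P by apply: (subsetP _ _ (inU u Pu)); rewrite cycle_subG.
have c1 : commute w (u * x) by apply: commute_sym; apply: commuteX; apply: commute_refl.
have c2 : commute w u.
  by apply: (centsP (cyclic_abelian cP)).
have c3 : commute w x.
  apply: (mulgI u); rewrite /commute mulgA -c2 -mulgA c1 mulgA //.
have : w \in 'C_P[x] by rewrite inE Pw; apply/cent1P.
by rewrite CP1 => /set1P ->; rewrite order1.
Qed.


Lemma small_index_sylow (gT : finGroupType) (G : {group gT}) (p : nat) x :
  prime p -> x \in G -> (#|G : <[x]>| < p)%N ->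
  exists P : {group gT}, [/\ p.-Sylow(G) P, P <| G & cyclic P].
Proof.
move=> pp Gx lti.
set P := <[x.`_p]>%G.
have sxG : <[x]> \subset G by rewrite cycle_subG.
have sPx : P \subset <[x]> by rewrite cycle_subG cycle_constt.
have sPG := subset_trans sPx sxG.
have i0 : (0 < #|G : <[x]>|)%N := indexg_gt0 G <[x]>.
have p'i : p^'.-nat #|G : <[x]>|.
  by rewrite p'natE //; apply/negP => /(dvdn_leq i0); lia.
have sylP : p.-Sylow(G) P.
  rewrite pHallE sPG /= -(Lagrange sxG) partnM ?cardG_gt0 // (part_p'nat p'i) muln1.
  by rewrite /P /= -!orderE order_constt.
have nPx : <[x]> \subset 'N(P) by apply: sub_abelian_norm (cycle_abelian x) sPx.
have sxN : <[x]> \subset 'N_G(P) by rewrite subsetI sxG nPx.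
have dv : (#|G : 'N_G(P)| %| #|G : <[x]>|)%N.
  by rewrite -(Lagrange_index (subsetIl G _) sxN) dvdn_mulr.
have hm := card_Syl_mod G pp.
rewrite (card_Syl sylP) in hm.
have e1 : #|G : 'N_G(P)| = 1%N.
  have lt : (#|G : 'N_G(P)| < p)%N by apply: leq_ltn_trans (dvdn_leq i0 dv) lti.
  by move: hm; rewrite modn_small.
have eN := index1g (subsetIl G 'N(P)) e1.
exists P; split => //; last exact: cycle_cyclic.
by rewrite /normal sPG /= -eN subsetIr.
Qed.

Lemma psi_sub (gT : finGroupType) (H K : {group gT}) : H \subset K -> (psi H <= psi K)%N.
Proof.
move=> sHK; rewrite /psi [X in (_ <= X)%N](bigID (mem H)) /=.
have -> : (\sum_(i in K | i \in H) #[i] = \sum_(i in H) #[i])%N.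
  apply: eq_bigl => y /=.
  by apply/andP/idP => [[]//|Hy]; split=> //; apply: (subsetP sHK).
exact: leq_addr.
Qed.

Lemma psic_step_ratio r m : prime r -> (3 <= r)%N -> (r %| m)%N -> (0 < m)%N ->
  (7 * psi_cyclic (m %/ r) <= psi_cyclic m)%N.
Proof.
move=> pr r3 rm m0.
have [m' com defm] := pfactor_coprime pr m0.
set b := logn r m in defm.
have b0 : (0 < b)%N by rewrite /b logn_gt0 mem_primes pr m0 rm.
have m'0 : (0 < m')%N by move: m0; rewrite defm muln_gt0 => /andP[].
have r0 : (0 < r)%N by apply: prime_gt0.
have e1 : (m %/ r = m' * r ^ b.-1)%N.
  by rewrite defm -{1}(prednK b0) expnSr mulnA mulnK.
have cX : forall k, coprime m' (r ^ k) by move=> k; rewrite coprime_sym coprimeXl.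
rewrite e1 defm !psic_mul ?expn_gt0 ?r0 //.
have h1 := psic_pow b pr; have h2 := psic_pow b.-1 pr.
rewrite mulnCA leq_mul2l; apply/orP; right.
have e2 : (2 * b + 1 = (2 * b.-1 + 1) + 2)%N by lia.
rewrite e2 expnD in h1.
set X := (r ^ (2 * b.-1 + 1))%N in h1 h2.
have X3 : (3 <= X)%N.
  apply: leq_trans r3 _; rewrite /X -{1}(expn1 r) leq_exp2l ?prime_gt1 //; lia.
have : ((r + 1) * (7 * psi_cyclic (r ^ b.-1)) <= (r + 1) * psi_cyclic (r ^ b))%N.
  rewrite mulnCA h2 h1 -mulnn; nia.
by rewrite leq_mul2l addn1.
Qed.

Lemma psi_proper_cyclic (gT : finGroupType) (Gb K : {group gT}) :
  cyclic Gb -> K \proper Gb ->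
  (forall r, prime r -> (r %| #|Gb|)%N -> (3 <= r)%N) -> (7 * psi K <= psi Gb)%N.
Proof.
move=> cG pKG h3.
have sKG := proper_sub pKG.
case/cyclicP: (cG) => y defG.
set d := #|Gb : K|.
have d0 : (0 < d)%N by apply: indexg_gt0.
have d1 : (1 < d)%N.
  rewrite ltn_neqAle d0 andbT; apply/eqP => /esym e.
  by move: pKG; rewrite (index1g sKG e) properxx.
set r := pdiv d.
have pr : prime r by apply: pdiv_prime.
have rd : (r %| d)%N by apply: pdiv_dvd.
have rG : (r %| #|Gb|)%N by rewrite -(Lagrange sKG) dvdn_mull.
have r3 := h3 r pr rG.
have oy : #[y] = #|Gb| by rewrite orderE defG.
set L := <[y ^+ r]>%G.
have oL : #|L| = (#|Gb| %/ r)%N by rewrite /L /= -orderE orderXdiv oy.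
have sLG : L \subset Gb by rewrite defG /L /= cycleX.
have sKL : K \subset L.
  rewrite -(cardSg_cyclic cG sKG sLG) oL -(Lagrange sKG) -/d -(divnK rd) mulnA.
  by rewrite mulnK ?prime_gt0 // dvdn_mulr.
apply: leq_trans (_ : 7 * psi L <= _)%N; first by rewrite leq_mul2l psi_sub ?orbT.
have -> : psi L = psi_cyclic (#|Gb| %/ r) by rewrite /L psi_cycle -oL.
by rewrite (psi_cyclic_group cG); apply: psic_step_ratio.
Qed.

Lemma index_ge (gT : finGroupType) (G : {group gT}) q x : ~~ cyclic G ->
  (forall r, prime r -> (r %| #|G|)%N -> (q <= r)%N) -> x \in G -> (q <= #|G : <[x]>|)%N.
Proof.
move=> ncG hq Gx.
have sxG : <[x]> \subset G by rewrite cycle_subG.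
have i0 : (0 < #|G : <[x]>|)%N by apply: indexg_gt0.
have i1 : (1 < #|G : <[x]>|)%N.
  rewrite ltn_neqAle i0 andbT; apply/eqP => /esym e.
  by move: ncG; rewrite -(index1g sxG e) cycle_cyclic.
have pr := pdiv_prime i1.
apply: leq_trans (hq _ pr _) (pdiv_leq i0).
by apply: dvdn_trans (pdiv_dvd _) _; rewrite -(Lagrange sxG) dvdn_mull.
Qed.

Lemma psi_index_bound (gT : finGroupType) (G : {group gT}) k :
  (forall x, x \in G -> k <= #|G : <[x]>|)%N -> (k * psi G <= #|G| * #|G|)%N.
Proof.
move=> h; rewrite /psi big_distrr /= -sum_nat_const; apply: leq_sum => x Gx.
have sxG : <[x]> \subset G by rewrite cycle_subG.
by rewrite -(Lagrange sxG) -orderE mulnC leq_mul2l h ?orbT.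
Qed.

Lemma cent_quotient_cyclic (gT : finGroupType) (G P : {group gT}) (p : nat) :
  p.-Sylow(G) P -> P <| G -> cyclic P -> cyclic (G / P) ->
  'C_G(P) / P = G / P -> cyclic G.
Proof.
move=> sylP nPG cP cQ eQ.
have [sPG nPG'] := andP nPG.
have pP : p.-group P := pHall_pgroup sylP.
case/cyclicP: cQ => c defQ.
have cC : c \in 'C_G(P) / P by rewrite eQ defQ cycle_id.
case/morphimP: cC => z Nz Cz defc.
have Gz : z \in G by move: Cz; rewrite inE => /andP[].
set x := z.`_p^'.
have sz : <[z]> \subset 'C_G(P) by rewrite cycle_subG.
have Cx : x \in 'C_G(P) by apply: (subsetP sz); apply: cycle_constt.
have Gx : x \in G by move: Cx; rewrite inE => /andP[].
have CPx : x \in 'C(P) by move: Cx; rewrite inE => /andP[].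
have Gzp : z.`_p \in G by apply: (subsetP (subset_trans sz (subsetIl _ _))); apply: cycle_constt.
have Pzp : z.`_p \in P by rewrite (mem_normal_Hall sylP nPG Gzp) p_elt_constt.
have ecx : c = coset P x.
  rewrite defc /= -{1}(consttC p z) morphM ?(subsetP nPG') //=.
  have h1 : coset P z.`_p = 1 by apply: coset_id.
  by rewrite h1 mul1g.
case/cyclicP: cP => u defP.
have Pu : u \in P by rewrite defP cycle_id.
have cux : commute u x by apply: commute_sym; apply: (centP CPx).
have co : coprime #[u] #[x].
  apply: (@pnat_coprime p); last exact: p_elt_constt.
  exact: mem_p_elt pP Pu.
have Gux : u * x \in G by rewrite groupM // (subsetP sPG).
have le : (#|G| <= #[u * x])%N.
  rewrite orderM // -(Lagrange sPG) -(card_quotient nPG') defQ -orderE ecx.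
  rewrite [#[u]]orderE -defP leq_mul2l; apply/orP; right.
  apply: dvdn_leq; first exact: order_gt0.
  by apply: (morph_order (coset_morphism P)); apply: (subsetP nPG').
apply/cyclicP; exists (u * x); apply/eqP; rewrite eq_sym eqEcard cycle_subG Gux.
by rewrite -orderE.
Qed.

Lemma psic_pow_ge4 p k : prime p -> (5 <= p)%N -> (0 < k)%N -> (4 * p ^ k <= psi_cyclic (p ^ k))%N.
Proof.
move=> pr p5 k0.
have h := psic_pow k pr.
have e : (2 * k + 1 = k + k.+1)%N by lia.
rewrite e expnD expnS in h.
set X := (p ^ k)%N in h *.
have X5 : (5 <= X)%N.
  apply: leq_trans p5 _; rewrite /X -{1}(expn1 p) leq_exp2l ?prime_gt1 //.
have : ((p + 1) * (4 * X) <= (p + 1) * psi_cyclic X)%N by rewrite h; nia.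
by rewrite leq_mul2l addn1.
Qed.

Lemma three_group (gT : finGroupType) (G : {group gT}) : ~~ cyclic G ->
  (forall r, prime r -> (r %| #|G|)%N -> r = 3%N) ->
  (43 * psi G < 19 * psi_cyclic #|G|)%N.
Proof.
move=> ncG h3.
have G0 := cardG_gt0 G.
have Q3 : forall r, prime r -> (r %| #|G|)%N -> (3 <= r)%N.
  by move=> r pr rG; rewrite (h3 r pr rG).
have n3 : 3.-nat #|G|.
  by apply/pnatP => // r pr rG; rewrite inE (h3 r pr rG).
have [k ek] := p_natP n3.
have pc0 := psic_gt0 G0.
have hl : (3 * #|G| ^ 2 <= 4 * psi_cyclic #|G|)%N.
  apply: psic_lower => // r pr rG; rewrite (h3 r pr rG); done.
case: (boolP [exists x in G, #|G : <[x]>| == 3%N]).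
  case/exists_inP => x Gx /eqP i3.
  have sxG : <[x]> \subset G by rewrite cycle_subG.
  set t := #[x].
  have et : #|G| = (t * 3)%N by rewrite -(Lagrange sxG) i3.
  have hy : forall y, y \in G -> (#[y] <= t)%N.
    move=> y Gy; have h := index_ge ncG Q3 Gy.
    have syG : <[y]> \subset G by rewrite cycle_subG.
    rewrite -(leq_pmul2r (isT : (0 < 3)%N)) -et -(Lagrange syG) -orderE.
    by rewrite leq_pmul2l ?order_gt0.
  have hs : (psi G <= psi_cyclic t + (t * 3 - t) * t)%N.
    rewrite /psi (bigID (mem <[x]>)) /=.
    have -> : (\sum_(i in G | i \in <[x]>) #[i] = psi <[x]>%G)%N.
      rewrite /psi; apply: eq_bigl => y /=.
      by apply/andP/idP => [[]//|Hy]; split=> //; apply: (subsetP sxG).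
    rewrite psi_cycle -/t leq_add2l.
    apply: leq_trans (_ : \sum_(i in G | i \notin <[x]>) t <= _)%N.
      by apply: leq_sum => y /andP[Gy _]; apply: hy.
    have : (\sum_(i in G) t = \sum_(i in G | i \in <[x]>) t + \sum_(i in G | i \notin <[x]>) t)%N.
      by rewrite (bigID (mem <[x]>)).
    rewrite sum_nat_const et.
    have -> : (\sum_(i in G | i \in <[x]>) t = t * t)%N.
      rewrite (eq_bigl (mem <[x]>)); first by rewrite sum_nat_const -orderE.
      move=> y /=; by apply/andP/idP => [[]//|Hy]; split=> //; apply: (subsetP sxG).
    move=> e; nia.
  have k0 : (0 < k)%N.
    case: k ek => // ek; move: et; rewrite ek expn0; lia.
  have tk : t = (3 ^ k.-1)%N.
    move: et; rewrite ek -{1}(prednK k0) expnSr => /eqP; rewrite eqn_mul2r /= => /eqP; done.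
  have h1 := psic_pow k.-1 (isT : prime 3).
  have h2 := psic_pow k (isT : prime 3).
  rewrite -tk in h1.
  have e : (2 * k + 1 = (2 * k.-1 + 1) + 2)%N by lia.
  rewrite e expnD -ek in h2.
  have e2 : (3 ^ (2 * k.-1 + 1) = 3 * (t * t))%N.
    by rewrite tk -expnD addnn -mul2n expnD expn1 mulnC.
  rewrite e2 in h1 h2.
  rewrite et in hs h2 *.
  have t1 : (0 < t)%N by apply: order_gt0.
  set T := (t * t)%N in h1 h2.
  have T1 : (1 <= T)%N by rewrite /T muln_gt0 t1.
  have hs' : (psi G <= psi_cyclic t + 2 * T)%N by move: hs; rewrite /T; lia.
  nia.
rewrite negb_exists_in => /forall_inP hn.
have h9 : forall x, x \in G -> (9 <= #|G : <[x]>|)%N.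
  move=> x Gx.
  have sxG : <[x]> \subset G by rewrite cycle_subG.
  have := index_ge ncG Q3 Gx; have := hn x Gx.
  have : (#|G : <[x]>| %| 3 ^ k)%N by rewrite -ek -(Lagrange sxG) dvdn_mull.
  case/(dvdn_pfactor _ _ (isT : prime 3)) => j _ ->.
  case: j => [|[|j]] //= _ _; rewrite expnS expnS; have := expn_gt0 3 j; lia.
have := psi_index_bound h9.
nia.
Qed.

Lemma fin_ineq b a g X c d : (d * g <= c * X)%N -> (c * b < d * a)%N -> (0 < X)%N ->
  (b * g < a * X)%N.
Proof.
move=> h1 h2 X0.
have d0 : (0 < d)%N by rewrite lt0n; apply/eqP => d0; move: h2; rewrite d0.
rewrite -(ltn_pmul2l d0).
apply: (@leq_ltn_trans (c * b * X)).
  by rewrite mulnCA [(c * b)%N]mulnC -mulnA leq_mul2l h1 orbT.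
by rewrite mulnA ltn_pmul2r.
Qed.

Lemma arith1 a b q p : (6 * b < 5 * a * q)%N -> (5 <= p)%N -> (b * p.+1 < a * q * p)%N.
Proof. move=> h1 h2; nia. Qed.

Lemma arith2 q p b g N c : (p * g <= N * N)%N -> (q * (N * N) <= p.+1 * c)%N ->
  (q * p * (b * g) <= b * p.+1 * c)%N.
Proof.
move=> h1 h2.
have e : (q * p * (b * g) = b * (q * (p * g)))%N by lia.
rewrite e -mulnA leq_mul2l; apply/orP; right.
by apply: leq_trans h2; rewrite leq_mul2l h1 orbT.
Qed.

Lemma eq1 A B : (28 * (A * B) = 4 * (A * (7 * B)))%N. Proof. lia. Qed.
Lemma eq2 P C : (28 * (P * C) = 7 * ((4 * P) * C))%N. Proof. lia. Qed.
Lemma arith3 g u v w : (g <= u + v -> 28 * u <= 4 * w -> 28 * v <= 7 * w -> 28 * g <= 11 * w)%N.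
Proof. lia. Qed.

Lemma eq3 a q p c : (a * q * p * c = q * p * (a * c))%N. Proof. lia. Qed.

Lemma main_gen (q a b : nat) : (3 <= q)%N -> (6 * b < 5 * a * q)%N -> (11 * b < 28 * a)%N ->
  ((q <= 3)%N -> (19 * b <= 43 * a)%N) ->
  forall n (gT : finGroupType) (G : {group gT}), (#|G| <= n)%N -> ~~ cyclic G ->
  (forall r, prime r -> (r %| #|G|)%N -> (q <= r)%N) ->
  (b * psi G < a * psi_cyclic #|G|)%N.
Proof.
move=> q3 C1 C2 C3 n; elim: n => [|n IHn] gT G leGn ncG hq.
  by move: (cardG_gt0 G); rewrite leqn0 in leGn; rewrite (eqP leGn).
set N := #|G|.
have N0 : (0 < N)%N := cardG_gt0 G.
have N4 : (3 < N)%N by rewrite ltnNge; apply: contra ncG; apply: cyclic_small.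
set p := max_pdiv N.
have pp : prime p by apply: max_pdiv_prime; lia.
have pN : (p %| N)%N := max_pdiv_dvd N.
have qp : (q <= p)%N := hq p pp pN.
have hmax : forall r, prime r -> (r %| N)%N -> (r <= p)%N.
  by move=> r pr rN; apply: max_pdiv_max; rewrite mem_primes pr N0 rN.
have pc0 := psic_gt0 N0.
have p4 : p != 4%N by apply/eqP => e; move: pp; rewrite e.
case: (boolP [exists x in G, #|G : <[x]>| < p]).
  case/exists_inP => x Gx lti.
  have [P [sylP nPG cP]] := small_index_sylow pp Gx lti.
  have p5 : (5 <= p)%N by have := index_ge ncG hq Gx; clear -lti p4 q3; lia.
  have [sPG nPG'] := andP nPG.
  have pP := pHall_pgroup sylP.
  have /andP[_ coP] := pHall_Hall sylP.
  have oQ : #|G / P| = #|G : P| := card_quotient nPG'.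
  have eN : N = (#|P| * #|G / P|)%N by rewrite oQ Lagrange.
  have P1 : (1 < #|P|)%N by rewrite (card_Hall sylP) p_part_gt1 mem_primes pp N0 pN.
  have Q0 : (0 < #|G / P|)%N := cardG_gt0 _.
  have hmul : psi_cyclic N = (psi P * psi_cyclic #|G / P|)%N.
    by rewrite eN psic_mul ?cardG_gt0 ?oQ // (psi_cyclic_group cP).
  have psiQ := psi_coset nPG.
  have hQ : forall r, prime r -> (r %| #|G / P|)%N -> (q <= r)%N.
    by move=> r pr rQ; apply: hq => //; rewrite -/N eN dvdn_mull.
  have psP0 := psi_gt0 P.
  case: (boolP (cyclic (G / P))) => cQ.
    set K := ('C_G(P) / P)%G.
    have sKQ : K \subset G / P by apply: quotientS; apply: subsetIl.
    have pKQ : K \proper G / P.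
      rewrite properEneq sKQ andbT; apply/eqP => e.
      by move: ncG; rewrite (cent_quotient_cyclic sylP nPG cP cQ e).
    have h7 := psi_proper_cyclic cQ pKQ (fun r pr rQ => leq_trans q3 (hQ r pr rQ)).
    have h4 : (4 * #|P| <= psi P)%N.
      have ek := card_pgroup pP.
      set k := logn p #|P| in ek.
      rewrite (psi_cyclic_group cP) ek; apply: psic_pow_ge4 => //.
      by move: P1; rewrite ek; case: k {ek}.
    have hb : (psi G <= psi P * psi K + #|P| * psi (G / P)%G)%N.
      rewrite psiQ.
      apply: leq_trans (_ : \sum_(c in G / P) ((if c \in K then #[c] * psi P else 0) + #[c] * #|P|) <= _)%N.
        apply: leq_sum => c cQ'.
        have [hle heq] := coset_sum_bound sylP nPG cP cQ'.
        case: ifP => cK.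
          by apply: leq_trans (leq_addr _ _); rewrite leq_mul2l hle orbT.
        by rewrite heq ?cK // add0n.
      rewrite big_split /= -big_mkcondr /=.
      rewrite (eq_bigl (mem K)); last first.
        move=> c /=; apply/andP/idP => [[]//|Kc]; split => //; exact: (subsetP sKQ).
      by rewrite -!big_distrl /= mulnC [(#|P| * _)%N]mulnC.
    have eQ : psi (G / P)%G = psi_cyclic #|G / P| := psi_cyclic_group cQ.
    rewrite -/N hmul -eQ.
    set A := psi P in hb h4 psP0 *; set B := psi K in hb h7; set Cq := psi (G / P)%G in hb h7 eQ *.
    have f1 : (28 * (A * B) <= 4 * (A * Cq))%N.
      rewrite eq1.
      by rewrite leq_mul2l leq_mul2l h7 !orbT.
    have f2 : (28 * (#|P| * Cq) <= 7 * (A * Cq))%N.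
      rewrite eq2.
      by rewrite leq_mul2l leq_mul2r h4 !orbT.
    have f3 : (28 * psi G <= 11 * (A * Cq))%N by apply: arith3 hb f1 f2.
    have ACq : (0 < A * Cq)%N by rewrite muln_gt0 psP0 eQ psic_gt0.
    exact: fin_ineq f3 C2 ACq.
  have leQ : (#|G / P| <= n)%N.
    have : (#|G / P| < N)%N by rewrite eN -{1}[#|G / P|]mul1n ltn_mul2r Q0.
    by rewrite -/N in leGn; move=> h; rewrite -ltnS; apply: leq_trans leGn.
  have IH := IHn _ (G / P)%G leQ cQ hQ.
  have hb : (psi G <= psi P * psi (G / P)%G)%N.
    rewrite psiQ /psi big_distrr /=; apply: leq_sum => c cQ'.
    have [hle _] := coset_sum_bound sylP nPG cP cQ'.
    by rewrite mulnC leq_mul2r hle orbT.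
  rewrite -/N hmul.
  have : (psi P * (b * psi (G / P)%G) < psi P * (a * psi_cyclic #|G / P|))%N.
    by rewrite ltn_pmul2l.
  move=> H; rewrite (mulnCA a); apply: leq_ltn_trans H.
  by rewrite mulnCA leq_mul2l hb orbT.
rewrite negb_exists_in => /forall_inP hn.
have hp : forall x, x \in G -> (p <= #|G : <[x]>|)%N by move=> x Gx; rewrite leqNgt hn.
have hb := psi_index_bound hp.
case: (leqP 5 p) => p5.
  have hl := @psic_lower q N p.+1 N0 (leqW qp).
  have hl' : (q * N ^ 2 <= p.+1 * psi_cyclic N)%N.
    by apply: hl => r pr rN; split; [apply: hq | rewrite ltnS; apply: hmax].
  rewrite -/N in hb.
  have B1 : (b * p.+1 < a * q * p)%N by apply: arith1.
  have A1 : (q * p * (b * psi G) <= b * p.+1 * psi_cyclic N)%N.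
    by apply: arith2 hb _; rewrite -mulnn in hl'.
  have A2 : (b * p.+1 * psi_cyclic N < a * q * p * psi_cyclic N)%N by rewrite ltn_pmul2r.
  have qp0 : (0 < q * p)%N by rewrite muln_gt0 (leq_trans _ q3) // (leq_trans _ p5).
  rewrite -(ltn_pmul2l qp0); apply: (leq_ltn_trans A1); apply: (leq_trans A2).
  by rewrite eq3.
have p1 := prime_gt1 pp.
have p3 : p = 3%N by clear -p1 p5 p4 q3 qp; lia.
have q3' : (q <= 3)%N by clear -p3 qp; lia.
have h3 : forall r, prime r -> (r %| #|G|)%N -> r = 3%N.
  move=> r pr rN; have h1 := hq r pr rN; have h2 := hmax r pr rN.
  by clear -h1 h2 p3 q3; lia.
have t := three_group ncG h3.
have c3 := C3 q3'.
have [b0|b0] := posnP b.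
  by rewrite b0 mul0n muln_gt0 pc0 andbT; move: C2; rewrite b0; clear; case: a.
rewrite -(ltn_pmul2l (isT : (0 < 43)%N)).
apply: (@leq_trans (b * (19 * psi_cyclic N))).
  by rewrite mulnCA ltn_pmul2l.
by rewrite mulnA (mulnC b) mulnA leq_mul2r c3 orbT.
Qed.

Local Close Scope group_scope.

Lemma rat_le a b x y : (0 < b)%N -> (0 < y)%N ->
  ((a%:R / b%:R <= x%:R / y%:R :> rat)%R = (a * y <= x * b)%N).
Proof.
move=> b0 y0.
rewrite ler_pdivrMr ?ltr0n // mulrAC ler_pdivlMr ?ltr0n // -!natrM ler_nat.
by rewrite mulnC.
Qed.

Lemma rat_lt a b x y : (0 < b)%N -> (0 < y)%N ->
  ((a%:R / b%:R < x%:R / y%:R :> rat)%R = (a * y < x * b)%N).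
Proof.
move=> b0 y0.
rewrite ltr_pdivrMr ?ltr0n // mulrAC ltr_pdivlMr ?ltr0n // -!natrM ltr_nat.
by rewrite mulnC.
Qed.

Unset Implicit Arguments.

Theorem lemma3p1 (gT : finGroupType) (G : {group gT}) :
  ~~ cyclic G ->
  ((19%:R / 43%:R <= psi' G)%R -> (2 %| #|G|)%N) /\
  ((31%:R / 77%:R < psi' G)%R -> (2 %| #|G|)%N || (3 %| #|G|)%N).
Proof.
move=> ncG.
have G0 := cardG_gt0 G.
have pc0 := psic_gt0 G0.
rewrite /psi'; split.
  rewrite rat_le // => h; apply/negPn/negP => n2.
  have hq : forall r, prime r -> (r %| #|G|)%N -> (3 <= r)%N.
    move=> r pr rG; have := prime_gt1 pr; case: r pr rG => [|[|[|r]]] //.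
    by move=> _ rG; rewrite rG in n2.
  have := @main_gen 3 19 43 isT isT isT (fun _ => isT) #|G| gT G (leqnn _) ncG hq.
  by rewrite ltnNge [(43 * _)%N]mulnC h.
rewrite rat_lt // => h; apply/negPn/negP; rewrite negb_or => /andP[n2 n3].
have hq : forall r, prime r -> (r %| #|G|)%N -> (5 <= r)%N.
  move=> r pr rG; have := prime_gt1 pr; case: r pr rG => [|[|[|[|[|r]]]]] //.
  - by move=> _ rG; rewrite rG in n2.
  - by move=> _ rG; rewrite rG in n3.
have := @main_gen 5 31 77 isT isT isT (fun h => False_ind _ (notF h)) #|G| gT G (leqnn _) ncG hq.
by rewrite ltnNge [(77 * _)%N]mulnC (ltnW h).
Qed.
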